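(* Let $K\ge1$, let $P^0,P^1,\ldots,P^K$ be real polynomials and $c_1,\ldots,c_K$ real constants, and let \[ F(x)=P^0(x)+\sum_{j=1}^K P^j(x)\frac{1}{\sqrt{x+c_j}}, \] considered on the interval $(-\min_j c_j,\infty)$, and assume $F$ is not identically zero there. Then the number $\mathcal Z(F)$ of real zeros of $F$ in this interval, counted with multiplicity, satisfies \[ \mathcal Z(F)\le K\left(\max_{j=1,\ldots,K}\deg(P^j)+1\right)+\deg(P^0), \] with the convention $\deg(0)=-1$. *)

(* Defs.v *)
From HB Require Import structures.
From mathcomp Require Import all_boot all_order all_algebra.
From mathcomp Require Import all_classical all_reals all_analysis.
Set Implicit Arguments. Unset Strict Implicit. Unset Printing Implicit Defensive.
Import Order.TTheory GRing.Theory Num.Theory.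
Local Open Scope ring_scope.

Definition Fsqrt (R : realType) (K : nat) (P0 : {poly R})
  (P : 'I_K -> {poly R}) (c : 'I_K -> R) : R -> R :=
  fun x => P0.[x] + \sum_(j < K) (P j).[x] * (Num.sqrt (x + c j))^-1.

Definition in_dom (R : realType) (K : nat) (c : 'I_K -> R) (x : R) : Prop :=
  forall j : 'I_K, - c j < x.

Definition zero_mult_ge (R : realType) (F : R -> R) (x : R) (m : nat) : Prop :=
  forall i : nat, (i < m)%N -> derive1n i F x = 0.

(* Z(F) <= B on the domain D: for every finite set of distinct points of D,
   the sum of (lower bounds for) their zero multiplicities is at most B. *)
Definition zeros_with_mult_le (R : realType) (F : R -> R) (D : R -> Prop)
  (B : int) : Prop :=
  forall (s : seq R) (m : R -> nat), uniq s ->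
    (forall x, x \in s -> D x /\ zero_mult_ge F x (m x)) ->
    ((\sum_(x <- s) m x)%N)%:Z <= B.

(* Main.v *)
Require Import Defs.
From HB Require Import structures.
From mathcomp Require Import all_boot all_order all_algebra.
From mathcomp Require Import all_classical all_reals all_analysis.
From mathcomp Require Import ring lra zify.
Import Order.TTheory GRing.Theory Num.Theory.
Local Open Scope ring_scope.
Set Implicit Arguments. Unset Strict Implicit.

Section Generic.
Context {R : realType}.
Variable a : R.

Definition fadd (f g : R -> R) := fun x => f x + g x.
Definition fmul (f g : R -> R) := fun x => f x * g x.

Lemma faddE f g : fadd f g = f + g. Proof. by []. Qed.
Lemma fmulE f g : fmul f g = f * g. Proof. by []. Qed.

Lemma derive1_nearI (f g : R -> R) x : a < x ->
  (forall y, a < y -> f y = g y) -> derive1 f x = derive1 g x.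
Proof.
move=> ax fg; rewrite !derive1E; apply: near_eq_derive.
near=> y; apply: fg; near: y; exact: lt_nbhsr.
Unshelve. all: by end_near. Qed.

Lemma derivable_nearI (f g : R -> R) x : a < x ->
  (forall y, a < y -> f y = g y) -> derivable f x 1 -> derivable g x 1.
Proof.
move=> ax fg; apply: near_eq_derivable.
near=> y; apply: fg; near: y; exact: lt_nbhsr.
Unshelve. all: by end_near. Qed.

Lemma derive1n_eqI (f g : R -> R) : (forall y, a < y -> f y = g y) ->
  forall n x, a < x -> derive1n n f x = derive1n n g x.
Proof.
move=> fg; elim=> [|n IH] x ax; first exact: fg.
rewrite !derive1nS; exact: derive1_nearI.
Qed.

Lemma derive1D_I (f g : R -> R) x : derivable f x 1 -> derivable g x 1 ->
  derive1 (fadd f g) x = derive1 f x + derive1 g x.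
Proof. by move=> df dg; rewrite !derive1E faddE deriveD. Qed.

Lemma derivableD_I (f g : R -> R) x : derivable f x 1 -> derivable g x 1 ->
  derivable (fadd f g) x 1.
Proof. by move=> df dg; rewrite faddE; apply: derivableD. Qed.

Lemma derive1M_I (f g : R -> R) x : derivable f x 1 -> derivable g x 1 ->
  derive1 (fmul f g) x = derive1 f x * g x + f x * derive1 g x.
Proof.
move=> df dg; rewrite !derive1E fmulE deriveM //.
by rewrite addrC /GRing.scale /= mulrC.
Qed.

Lemma derivableM_I (f g : R -> R) x : derivable f x 1 -> derivable g x 1 ->
  derivable (fmul f g) x 1.
Proof. by move=> df dg; rewrite fmulE; apply: derivableM. Qed.

Definition dup (n : nat) (f : R -> R) :=
  forall k x, (k <= n)%N -> a < x -> derivable (derive1n k f) x 1.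
Definition smooth (f : R -> R) := forall n, dup n f.

Lemma derive1nD (u v : R -> R) k :
  (forall j x, (j < k)%N -> a < x -> derivable (derive1n j u) x 1) ->
  (forall j x, (j < k)%N -> a < x -> derivable (derive1n j v) x 1) ->
  forall x, a < x -> derive1n k (fadd u v) x = derive1n k u x + derive1n k v x.
Proof.
elim: k => [|k IH] du dv x ax; first by [].
rewrite !derive1nS.
have du' : forall j z, (j < k)%N -> a < z -> derivable (derive1n j u) z 1.
  by move=> j z jk az; apply: du => //; exact: ltnW.
have dv' : forall j z, (j < k)%N -> a < z -> derivable (derive1n j v) z 1.
  by move=> j z jk az; apply: dv => //; exact: ltnW.
have e : forall y, a < y -> derive1n k (fadd u v) y = fadd (derive1n k u) (derive1n k v) y.
  by move=> y ay; rewrite (IH du' dv' y ay).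
rewrite (derive1_nearI ax e) derive1D_I //; [exact: du | exact: dv].
Qed.

Lemma dupD n u v : dup n u -> dup n v -> dup n (fadd u v).
Proof.
move=> du dv k x kn ax.
have du' : forall j z, (j < k)%N -> a < z -> derivable (derive1n j u) z 1.
  by move=> j z jk az; apply: du => //; exact: leq_trans (ltnW jk) kn.
have dv' : forall j z, (j < k)%N -> a < z -> derivable (derive1n j v) z 1.
  by move=> j z jk az; apply: dv => //; exact: leq_trans (ltnW jk) kn.
have e : forall y, a < y -> fadd (derive1n k u) (derive1n k v) y = derive1n k (fadd u v) y.
  by move=> y ay; rewrite (derive1nD du' dv' ay).
apply: (derivable_nearI ax e).
by apply: derivableD_I; [apply: du|apply: dv].
Qed.

Lemma smoothD u v : smooth u -> smooth v -> smooth (fadd u v).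
Proof. by move=> su sv n; apply: dupD. Qed.

Lemma smooth_derive1 f : smooth f -> smooth (derive1 f).
Proof.
move=> sf n k x kn ax; rewrite -derive1Sn; exact: (sf k.+1).
Qed.

Lemma smooth_d0 f x : smooth f -> a < x -> derivable f x 1.
Proof. by move=> sf ax; exact: (sf 0%N 0%N x (leqnn 0) ax). Qed.

Lemma smoothM_aux n : forall f g, smooth f -> smooth g -> dup n (fmul f g).
Proof.
elim: n => [|n IH] f g sf sg k x kn ax.
  rewrite leqn0 in kn; rewrite (eqP kn) /=.
  by apply: derivableM_I; apply: smooth_d0.
case: k kn => [|k] kn.
  by apply: derivableM_I; apply: smooth_d0.
have h1 : dup n (fmul (derive1 f) g) := IH _ _ (smooth_derive1 sf) sg.
have h2 : dup n (fmul f (derive1 g)) := IH _ _ sf (smooth_derive1 sg).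
have e : forall y, a < y ->
    derive1n k (fadd (fmul (derive1 f) g) (fmul f (derive1 g))) y =
    derive1n k.+1 (fmul f g) y.
  move=> y ay; rewrite derive1Sn; apply: derive1n_eqI => // z az.
  rewrite derive1M_I //; apply: smooth_d0 => //.
apply: (derivable_nearI ax e).
exact: (dupD h1 h2 kn ax).
Qed.

Lemma smoothM f g : smooth f -> smooth g -> smooth (fmul f g).
Proof. by move=> sf sg n; apply: smoothM_aux. Qed.


Lemma mult_transfer m : forall (w g : R -> R) x, smooth w -> smooth g -> a < x ->
  zero_mult_ge g x m -> zero_mult_ge (fmul w g) x m.
Proof.
elim: m => [|m IH] w g x sw sg ax zg i im; first by [].
case: i im => [|i] im.
  by move: (zg 0%N isT) => /= g0; rewrite /fmul g0 mulr0.
rewrite derive1Sn.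
have e : forall y, a < y -> derive1 (fmul w g) y = fadd (fmul (derive1 w) g) (fmul w (derive1 g)) y.
  by move=> z az; rewrite derive1M_I //; apply: smooth_d0.
have d1 : forall j z, (j < i)%N -> a < z -> derivable (derive1n j (fmul (derive1 w) g)) z 1.
  move=> j z _ az; exact: (smoothM (smooth_derive1 sw) sg (leqnn j) az).
have d2 : forall j z, (j < i)%N -> a < z -> derivable (derive1n j (fmul w (derive1 g))) z 1.
  move=> j z _ az; exact: (smoothM sw (smooth_derive1 sg) (leqnn j) az).
rewrite (derive1n_eqI e) // (derive1nD d1 d2 ax).
have z1 : zero_mult_ge g x m by move=> j jm; apply: zg; apply: ltnW.
have z2 : zero_mult_ge (derive1 g) x m.
  by move=> j jm; rewrite -derive1Sn; apply: zg.
rewrite (IH _ _ _ (smooth_derive1 sw) sg ax z1 i im).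
by rewrite (IH _ _ _ sw (smooth_derive1 sg) ax z2 i im) addr0.
Qed.

End Generic.

Section Zeros.
Context {R : realType}.
Variable a : R.

Definition Zlt (f : R -> R) (N : nat) := forall (s : seq R) (m : R -> nat),
  uniq s -> (forall x, x \in s -> a < x /\ zero_mult_ge f x (m x)) ->
  (\sum_(x <- s) m x < N)%N.

Lemma Zlt_eqI f g N : (forall y, a < y -> f y = g y) -> Zlt f N -> Zlt g N.
Proof.
move=> fg zf s m us hs; apply: zf => // x xs; have [ax zx] := hs x xs.
split => // i im; rewrite (derive1n_eqI fg) //; exact: zx.
Qed.

Lemma Zlt_mul w g N : smooth a w -> smooth a g -> Zlt (fmul w g) N -> Zlt g N.
Proof.
move=> sw sg zf s m us hs; apply: zf => // x xs; have [ax zx] := hs x xs.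
split => //; exact: mult_transfer.
Qed.

Lemma rolle_list f (sf : smooth a f) (m : R -> nat) : forall (L : seq R) x,
  sorted <%R (x :: L) ->
  (forall z, z \in x :: L -> [/\ a < z, zero_mult_ge f z (m z) & (0 < m z)%N]) ->
  exists t (m' : R -> nat), [/\ uniq t,
    (forall z, z \in t -> a < z /\ zero_mult_ge (derive1 f) z (m' z)),
    (forall z, z \in t -> x <= z) &
    (\sum_(z <- t) m' z).+1 = \sum_(z <- x :: L) m z].
Proof.
elim=> [|y L IH] x.
  move=> _ hx; have [ax zx mx] := hx x (mem_head _ _).
  exists [:: x], (fun z => (m z).-1); split => //.
  - move=> z; rewrite inE => /eqP ->; split => // i im.
    rewrite -derive1Sn; apply: zx; rewrite -ltn_predRL //.
  - by move=> z; rewrite inE => /eqP ->.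
  - by rewrite !big_seq1 prednK.
rewrite /= => /andP [xy syL] hs.
have [t [m' [ut ht tge st]]] := IH y syL (fun z zi => hs z (ltac:(by rewrite inE zi orbT))).
have [ax zx mx] := hs x (mem_head _ _).
have [ay zy my] := hs y (ltac:(by rewrite !inE eqxx orbT)).
have fx0 : f x = 0 by apply: (zx 0%N).
have fy0 : f y = 0 by apply: (zy 0%N).
have dI : forall z, a < z -> derivable f z 1 by move=> z az; exact: (sf 0%N 0%N).
have [xi xixy dxi] : exists2 c, c \in `]x, y[%R & is_derive c 1 f 0.
  apply: Rolle => //.
  - move=> z; rewrite in_itv /= => /andP [xz _]; apply: dI.
    exact: lt_trans ax xz.
  - apply: derivable_within_continuous => z; rewrite in_itv /= => /andP [xz _].
    apply: dI; exact: lt_le_trans ax xz.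
  - by rewrite fx0 fy0.
move: xixy; rewrite in_itv /= => /andP [xxi xiy].
have df0 : derive1 f xi = 0 by rewrite derive1E; exact: derive_val.
pose m'' := fun z => if z == x then (m x).-1 else if z == xi then 1%N else m' z.
have xne : (x == xi) = false := lt_eqF xxi.
have xine : (xi == x) = false by rewrite eq_sym.
have xt : x \notin t.
  apply/negP => /tge; rewrite leNgt => /negP; apply; exact: xy.
have xit : xi \notin t.
  apply/negP => /tge; rewrite leNgt => /negP; apply; exact: xiy.
exists [:: x, xi & t], m''; split.
- by rewrite /= !inE negb_or xne xt xit ut.
- move=> z; rewrite !inE => /orP [/eqP ->|/orP [/eqP ->|zt]].
  + split => // i; rewrite /m'' eqxx => im.
    rewrite -derive1Sn; apply: zx; rewrite -ltn_predRL //.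
  + split; first exact: lt_trans ax xxi.
    rewrite /m'' eqxx xine.
    by move=> [|i] // _; rewrite derive1n0.
  + have [az zz] := ht z zt; split => //.
    have zx' : (z == x) = false by apply/negP => /eqP e; move: xt; rewrite -e zt.
    have zxi : (z == xi) = false by apply/negP => /eqP e; move: xit; rewrite -e zt.
    by rewrite /m'' zx' zxi.
- move=> z; rewrite !inE => /orP [/eqP ->|/orP [/eqP ->|zt]] //.
  + exact: ltW.
  + apply: le_trans (tge z zt); exact: ltW.
- rewrite [X in _ = X]big_cons -st !big_cons.
  have -> : \sum_(z <- t) m'' z = \sum_(z <- t) m' z.
    apply: eq_big_seq => z zt.
    have zx' : (z == x) = false by apply/negP => /eqP e; move: xt; rewrite -e zt.
    have zxi : (z == xi) = false by apply/negP => /eqP e; move: xit; rewrite -e zt.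
    by rewrite /m'' zx' zxi.
  rewrite /m'' eqxx xine eqxx.
  by rewrite -[in RHS](prednK mx) addSn.
Qed.

Lemma rolle_mult f N : smooth a f -> Zlt (derive1 f) N -> Zlt f N.+1.
Proof.
move=> sf zf s m us hs.
rewrite (bigID (fun z => (0 < m z)%N)) /= addnC big1 ?add0n; last first.
  by move=> z; case: (m z).
rewrite -big_filter.
set s1 := seq.filter _ s.
have us1 : uniq s1 by rewrite filter_uniq.
rewrite -(perm_big _ (permEl (perm_sort <=%R s1))).
set s2 := sort _ _.
have us2 : uniq s2 by rewrite sort_uniq.
have ss2 : sorted <%R s2.
  rewrite lt_sorted_uniq_le us2 /=; apply: sort_sorted; exact: le_total.
have hs2 : forall z, z \in s2 -> [/\ a < z, zero_mult_ge f z (m z) & (0 < m z)%N].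
  move=> z; rewrite mem_sort mem_filter => /andP [mz zs].
  by have [az zz] := hs z zs; split.
case E : s2 ss2 hs2 => [|x L] ss2' hs2'; first by rewrite big_nil.
have [t [m' [ut ht _ st]]] := rolle_list sf ss2' hs2'.
rewrite -st ltnS; exact: zf.
Qed.

Lemma const_I (f : R -> R) (x y : R) : (forall z, a < z -> derivable f z 1) ->
  (forall z, a < z -> derive1 f z = 0) -> a < x -> a < y -> f x = f y.
Proof.
move=> df d0.
wlog xy : x y / x <= y.
  move=> H ax ay; case: (leP x y) => [xy|/ltW yx]; first exact: H.
  by apply/esym; apply: H.
move=> ax ay.
have [c cxy e] : exists2 c, c \in `[x, y]%R & f y - f x = derive1 f c * (y - x).
  apply: MVT_segment => //.
  - move=> z; rewrite in_itv /= => /andP [xz _].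
    rewrite derive1E; apply: derivableP; apply: df; exact: lt_trans ax xz.
  - apply: derivable_within_continuous => z; rewrite in_itv /= => /andP [xz _].
    apply: df; exact: lt_le_trans ax xz.
have ac : a < c by move: cxy; rewrite in_itv /= => /andP [xc _]; exact: lt_le_trans ax xc.
by apply/eqP; rewrite eq_sym -subr_eq0 e d0 // mul0r.
Qed.

Lemma chain S : forall (E : nat -> R -> R) (w : R -> R) N,
  (forall m, smooth a (E m)) -> smooth a w -> (forall x, a < x -> w x != 0) ->
  (forall m x, a < x -> E m.+1 x = w x * derive1 (E m) x) ->
  (exists x, a < x /\ E 0%N x != 0) ->
  ((exists x, a < x /\ E S x != 0) -> Zlt (E S) N) -> Zlt (E 0%N) (N + S).
Proof.
elim: S => [|S IH] E w N sE sw wn0 Ed nz hS; first by rewrite addn0; apply: hS.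
have [[x1 [ax1 e1]]|no] := pselect (exists x, a < x /\ E 1%N x != 0).
  have z1 : Zlt (E 1%N) (N + S).
    apply: (IH (fun m => E m.+1) w N) => //.
    by move=> m x ax; apply: Ed.
    by exists x1.
  have z2 : Zlt (fmul w (derive1 (E 0%N))) (N + S).
    by apply: Zlt_eqI z1 => y ay; rewrite Ed.
  rewrite addnS; apply: rolle_mult => //.
  exact: Zlt_mul sw (smooth_derive1 (sE 0%N)) z2.
have h1 : forall x, a < x -> derive1 (E 0%N) x = 0.
  move=> x ax; apply/eqP; apply: contraNT (wn0 x ax) => dn.
  have : E 1%N x = 0.
    apply/eqP; apply/negPn/negP => ne; apply: no; exists x; split => //.
  by rewrite Ed // => /eqP; rewrite mulf_eq0 (negPf dn) orbF.
have [x0 [ax0 nz0]] := nz.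
have cst : forall y, a < y -> E 0%N y = E 0%N x0.
  move=> y ay; apply: const_I => // z az; exact: smooth_d0.
move=> s m us hs; rewrite big1_seq ?addnS //.
move=> z /andP [_ zs]; have [az zz] := hs z zs.
case: (m z) zz => // k zz; have := zz 0%N isT; rewrite /= cst // => e0.
by move: nz0; rewrite e0 eqxx.
Qed.

End Zeros.

Section Concrete.
Context {R : realType}.
Variable a : R.

Definition pw (c e : R) (x : R) := (x + c) `^ e.

Lemma pw_gt0 (c e x : R) : 0 < x + c -> 0 < pw c e x.
Proof. by move=> h; rewrite /pw powR_gt0. Qed.

Lemma pwD (c e f x : R) : 0 < x + c -> pw c (e + f) x = pw c e x * pw c f x.
Proof. by move=> h; rewrite /pw powRD //; apply/implyP => _; rewrite gt_eqF. Qed.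

Lemma pw1 (c x : R) : 0 < x + c -> pw c 1 x = x + c.
Proof. by move=> h; rewrite /pw powRr1 // ltW. Qed.


Lemma pwS (c e x : R) : 0 < x + c -> pw c e x = pw c (e - 1) x * (x + c).
Proof. by move=> h; rewrite -(pw1 h) -pwD // subrK. Qed.

Lemma pw_derive (c e x : R) : 0 < x + c -> is_derive x 1 (pw c e) (e * pw c (e - 1) x).
Proof.
move=> h.
have h1 : is_derive x 1 (fun y : R => y + c) 1.
  have := @is_derive_shift R x 1 c; by [].
have := @is_derive1_comp R (fun y : R => y `^ e) (fun y => y + c) x _ _ (is_derive1_powR e h) h1.
by rewrite mulr1.
Qed.

Lemma derive1nZ (g : R -> R) (c : R) k :
  (forall j x, (j < k)%N -> a < x -> derivable (derive1n j g) x 1) ->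
  forall x, a < x -> derive1n k (fun y => c * g y) x = c * derive1n k g x.
Proof.
elim: k => [|k IH] dg x ax; first by [].
rewrite !derive1nS.
have dg' : forall j z, (j < k)%N -> a < z -> derivable (derive1n j g) z 1.
  by move=> j z jk az; apply: dg => //; exact: ltnW.
have e : forall y, a < y -> derive1n k (fun y => c * g y) y = (fun y => c * derive1n k g y) y.
  by move=> y ay; rewrite (IH dg' y ay).
rewrite (derive1_nearI ax e) derive1Ml //; exact: dg.
Qed.

Lemma derivable_of (f : R -> R) (x df : R) : is_derive x 1 f df -> derivable f x 1.
Proof. by case. Qed.


Lemma smooth_family (T : Type) (F : T -> R -> R) (D : T -> T) (k : T -> R) :
  (forall t x, a < x -> is_derive x 1 (F t) (k t * F (D t) x)) ->
  forall t, smooth a (F t).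
Proof.
move=> hF t n; elim: n t => [|n IH] t j x jn ax.
  by rewrite leqn0 in jn; rewrite (eqP jn); exact: derivable_of (hF t x ax).
case: j jn => [|j] jn; first exact: derivable_of (hF t x ax).
have d1 : forall i z, (i < j)%N -> a < z -> derivable (derive1n i (F (D t))) z 1.
  move=> i z ij az; apply: (IH (D t) i z) => //.
  by apply: leq_trans (ltnW ij) _.
have e : forall y, a < y ->
    (fun y => k t * derive1n j (F (D t)) y) y = derive1n j.+1 (F t) y.
  move=> y ay; rewrite derive1Sn /= -(derive1nZ (k t) d1 ay).
  apply: (derive1n_eqI (a:=a)) => // z az.
  by rewrite derive1E; have [_ ->] := hF t z az.
apply: (derivable_nearI ax e).
apply: (@derivableM_I _ (fun _ => k t)); first exact: derivable_cst.
exact: (IH (D t) j x).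
Qed.

Lemma smooth_horner (p : {poly R}) : smooth a (horner p).
Proof.
apply: (@smooth_family _ horner (fun q => q^`()) (fun _ => 1)) => t x _.
rewrite mul1r; exact: is_derive_poly.
Qed.

Lemma smooth_pw c : (forall x, a < x -> 0 < x + c) -> forall e, smooth a (pw c e).
Proof.
move=> hc; apply: (@smooth_family _ (pw c) (fun e => e - 1) id) => t x ax.
exact: pw_derive (hc x ax).
Qed.

Lemma smooth_eqI (f g : R -> R) : (forall y, a < y -> f y = g y) -> smooth a f -> smooth a g.
Proof.
move=> fg sf n k x kn ax.
have e : forall y, a < y -> derive1n k f y = derive1n k g y.
  by move=> y ay; apply: (derive1n_eqI (a:=a)).
exact: (derivable_nearI ax e (sf n k x kn ax)).
Qed.

Lemma smooth_sum K : forall (g : 'I_K -> R -> R), (forall j, smooth a (g j)) ->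
  smooth a (fun x => \sum_(j < K) g j x).
Proof.
elim: K => [|K IH] g sg.
  apply: (@smooth_eqI (horner 0)); last exact: smooth_horner.
  by move=> y _; rewrite big_ord0 horner0.
apply: (@smooth_eqI (fadd (fun x => \sum_(j < K) g (widen_ord (leqnSn K) j) x) (g ord_max))).
  by move=> y _; rewrite big_ord_recr.
apply: smoothD => //; exact: IH.
Qed.

Lemma is_derive_sumI K (g : 'I_K -> R -> R) (d : 'I_K -> R) (x : R) :
  (forall j, is_derive x 1 (g j) (d j)) ->
  is_derive x 1 (fun y => \sum_(j < K) g j y) (\sum_(j < K) d j).
Proof. by move=> h; rewrite -fct_sumE; exact: is_derive_sum. Qed.

End Concrete.

Section Ops.
Context {R : realType}.

Definition opj (cj cK e1 e2 : R) (Q : {poly R}) : {poly R} :=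
  Q^`() * ('X + cj%:P) * ('X + cK%:P) + Q * ((e1 + e2) *: 'X + (e1 * cK + e2 * cj)%:P).
Definition op1 (c e : R) (Q : {poly R}) : {poly R} := Q^`() * ('X + c%:P) + e *: Q.

Lemma coefXC (p : {poly R}) c k :
  (p * ('X + c%:P))`_k = (if k is i.+1 then p`_i else 0) + c * p`_k.
Proof. by rewrite mulrDr coefD coefMX coefMC mulrC; case: k. Qed.

Lemma coefLin (p : {poly R}) u v k :
  (p * (u *: 'X + v%:P))`_k = (if k is i.+1 then u * p`_i else 0) + v * p`_k.
Proof.
rewrite mulrDr coefD -scalerAr coefZ coefMX coefMC [v * _]mulrC.
by case: k => [|k] /=; rewrite ?mulr0.
Qed.


Lemma size_op1 (Q : {poly R}) c e n : (size Q <= n.+1)%N -> e = - n%:R ->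
  (size (op1 c e Q) <= n)%N.
Proof.
move=> sQ he; move/leq_sizeP: sQ => Qz; apply/leq_sizeP => k kn.
rewrite /op1 coefD coefXC coefZ.
case: k kn => [|i] kn /=; rewrite !coef_deriv.
  have n0 : n = 0%N by lia.
  rewrite (Qz 1%N); last lia.
  by rewrite he n0 !(mul0rn, mulr0, addr0, add0r, oppr0, mul0r).
rewrite (Qz i.+2); last lia.
rewrite mul0rn mulr0 addr0 he.
have [ekn|ne] := eqVneq i.+1 n.
  rewrite ekn -mulr_natl; ring.
rewrite (Qz i.+1) ?mul0rn ?mulr0 ?addr0 //; lia.
Qed.

Lemma size_opj (Q : {poly R}) cj cK e1 e2 S : (size Q <= S)%N ->
  e1 + e2 = 1 - S%:R -> (size (opj cj cK e1 e2 Q) <= S)%N.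
Proof.
case: S => [|n] sQ he.
  move: sQ; rewrite size_poly_leq0 => /eqP ->.
  by rewrite /opj deriv0 !mul0r add0r size_poly0.
move/leq_sizeP: sQ => Qz; apply/leq_sizeP => k kn.
case: k kn => [//|i] kn.
rewrite /opj coefD coefXC coefLin /= !coefXC.
case: i kn => [|l] kn /=; rewrite !coef_deriv.
  have n0 : n = 0%N by lia.
  rewrite (Qz 1%N) ?(Qz 2%N); try lia.
  by rewrite he n0 !(mul0rn, mulr0, addr0, add0r, subrr, mul0r).
rewrite (Qz l.+2) ?(Qz l.+3); try lia.
rewrite !(mul0rn, mulr0, addr0, add0r) he.
have [ein|ne] := eqVneq l.+1 n.
  rewrite ein -mulr_natl -natr1; ring.
rewrite (Qz l.+1) ?mul0rn ?mulr0 ?addr0 //; lia.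
Qed.

Lemma size_op1_le (Q : {poly R}) c e S : (size Q <= S)%N -> (size (op1 c e Q) <= S)%N.
Proof.
move/leq_sizeP => Qz; apply/leq_sizeP => k kS.
rewrite /op1 coefD coefXC coefZ.
case: k kS => [|i] kS /=; rewrite !coef_deriv.
  by rewrite (Qz 0%N) ?(Qz 1%N) // ?mul0rn ?mulr0 ?addr0 //; lia.
rewrite (Qz i.+1) ?(Qz i.+2) // ?mul0rn ?mulr0 ?addr0 //; lia.
Qed.

Lemma is_derive_eq (f : R -> R) (x df df' : R) :
  is_derive x 1 f df -> df = df' -> is_derive x 1 f df'.
Proof. by move=> h <-. Qed.

Lemma T1_der (Q : {poly R}) (c e x : R) : 0 < x + c ->
  is_derive x 1 (fun y => Q.[y] * pw c e y)
    (Q^`().[x] * pw c e x + Q.[x] * (e * pw c (e - 1) x)).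
Proof.
move=> h.
have := is_deriveM (is_derive_poly Q x) (pw_derive e h).
move/is_derive_eq; apply.
by rewrite /GRing.scale /=; ring.
Qed.

Lemma Tj_der (Q : {poly R}) (cj cK e1 e2 x : R) : 0 < x + cj -> 0 < x + cK ->
  is_derive x 1 (fun y => Q.[y] * pw cj e1 y * pw cK e2 y)
    (Q^`().[x] * pw cj e1 x * pw cK e2 x + Q.[x] * (e1 * pw cj (e1 - 1) x) * pw cK e2 x
     + Q.[x] * pw cj e1 x * (e2 * pw cK (e2 - 1) x)).
Proof.
move=> hj hK.
have := is_deriveM (is_deriveM (is_derive_poly Q x) (pw_derive e1 hj)) (pw_derive e2 hK).
move/is_derive_eq; apply.
rewrite /GRing.scale /= -[(horner Q * pw cj e1) x]/(Q.[x] * pw cj e1 x); ring.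
Qed.

Lemma pwS' (c e x : R) : 0 < x + c -> pw c (e + 1) x = pw c e x * (x + c).
Proof. by move=> h; rewrite (pwS (e + 1) h) addrK. Qed.

Lemma T1_id1 (Q : {poly R}) (c e x : R) : 0 < x + c ->
  Q^`().[x] * pw c e x + Q.[x] * (e * pw c (e - 1) x) =
  (op1 c e Q).[x] * pw c (e - 1) x.
Proof.
move=> h; rewrite (pwS e h) /op1 !(hornerD, hornerM, hornerZ, hornerX, hornerC); ring.
Qed.

Lemma T1_id2 (Q : {poly R}) (c e x : R) : 0 < x + c ->
  (x + c) ^+ 2 * (Q^`().[x] * pw c e x + Q.[x] * (e * pw c (e - 1) x)) =
  (op1 c e Q).[x] * pw c (e + 1) x.
Proof.
move=> h; rewrite (pwS' e h) (pwS e h) /op1 !(hornerD, hornerM, hornerZ, hornerX, hornerC); ring.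
Qed.

Lemma Tj_id (Q : {poly R}) (cj cK e1 e2 x : R) : 0 < x + cj -> 0 < x + cK ->
  (x + cK) ^+ 2 * (Q^`().[x] * pw cj e1 x * pw cK e2 x + Q.[x] * (e1 * pw cj (e1 - 1) x) * pw cK e2 x
     + Q.[x] * pw cj e1 x * (e2 * pw cK (e2 - 1) x)) =
  (opj cj cK e1 e2 Q).[x] * pw cj (e1 - 1) x * pw cK (e2 + 1) x.
Proof.
move=> hj hK; rewrite (pwS' e2 hK) (pwS e2 hK) (pwS e1 hj) /opj !(hornerD, hornerM, hornerZ, hornerX, hornerC); ring.
Qed.

End Ops.

Section Inner.
Context {R : realType}.
Variable a : R.

Definition fs K (b : R) (c : 'I_K -> R) (P : 'I_K -> {poly R}) : R -> R :=
  fun x => \sum_(j < K) (P j).[x] * pw (c j) (- b) x.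

Fixpoint seqop (op : nat -> {poly R} -> {poly R}) (Q0 : {poly R}) (m : nat) : {poly R} :=
  match m with 0%N => Q0 | m'.+1 => op m' (seqop op Q0 m') end.

Definition ex1 (b : R) (m : nat) : R := - b - m%:R.
Definition ex2 (b : R) (S m : nat) : R := b - S%:R + 1 + m%:R.
Definition exg (S m : nat) : R := 1 - S%:R + m%:R.

Lemma ex1S b m : ex1 b m.+1 = ex1 b m - 1.
Proof. by rewrite /ex1 -addn1 natrD; ring. Qed.
Lemma ex2S b S m : ex2 b S m.+1 = ex2 b S m + 1.
Proof. by rewrite /ex2 -addn1 natrD; ring. Qed.
Lemma exgS S m : exg S m.+1 = exg S m + 1.
Proof. by rewrite /exg -addn1 natrD; ring. Qed.

Lemma smooth_term (Q : {poly R}) c1 c2 e1 e2 :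
  (forall x, a < x -> 0 < x + c1) -> (forall x, a < x -> 0 < x + c2) ->
  smooth a (fun y => Q.[y] * pw c1 e1 y * pw c2 e2 y).
Proof.
move=> h1 h2.
apply: (@smooth_eqI _ a (fmul (fmul (horner Q) (pw c1 e1)) (pw c2 e2))) => //.
apply: smoothM; last exact: smooth_pw.
apply: smoothM; [exact: smooth_horner | exact: smooth_pw].
Qed.

Lemma smooth_term1 (Q : {poly R}) c1 e1 :
  (forall x, a < x -> 0 < x + c1) -> smooth a (fun y => Q.[y] * pw c1 e1 y).
Proof.
move=> h1.
apply: (@smooth_eqI _ a (fmul (horner Q) (pw c1 e1))) => //.
apply: smoothM; [exact: smooth_horner | exact: smooth_pw].
Qed.


Lemma inner (S : nat) K : forall (b : R) (c : 'I_K -> R) (P : 'I_K -> {poly R}),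
  (forall j x, a < x -> 0 < x + c j) -> (forall j, (size (P j) <= S)%N) ->
  (exists x, a < x /\ fs b c P x != 0) -> Zlt a (fs b c P) (K * S).
Proof.
elim: K => [|K IH] b c P hc hP [x0 [ax0 nz0]].
  by move: nz0; rewrite /fs big_ord0 eqxx.
pose cK := c ord_max.
pose c' := fun j : 'I_K => c (widen_ord (leqnSn K) j).
pose P' := fun j : 'I_K => P (widen_ord (leqnSn K) j).
have hK : forall x, a < x -> 0 < x + cK by move=> x ax; exact: hc.
have hc' : forall j x, a < x -> 0 < x + c' j by move=> j x ax; exact: hc.
pose Qs := fun m (j : 'I_K) => seqop (fun m => opj (c' j) cK (ex1 b m) (ex2 b S m)) (P' j) m.
pose QK := seqop (fun m => op1 cK (exg S m)) (P ord_max).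
pose E := fun (m : nat) (x : R) =>
  \sum_(j < K) (Qs m j).[x] * pw (c' j) (ex1 b m) x * pw cK (ex2 b S m) x
  + (QK m).[x] * pw cK (exg S m) x.
have sQs : forall m j, (size (Qs m j) <= S)%N.
  elim=> [|m IHm] j; first exact: hP.
  apply: size_opj; first exact: IHm.
  rewrite /ex1 /ex2; ring.
have sQK : forall m, (m <= S)%N -> (size (QK m) <= S - m)%N.
  elim=> [|m IHm] mS; first by rewrite subn0; exact: hP.
  have h1 : (size (QK m) <= (S - m.+1).+1)%N by rewrite subnSK //; apply: IHm; exact: ltnW.
  apply: (size_op1 cK (e:=exg S m) h1); rewrite /exg natrB //; ring.
have QKS : QK S = 0.
  by apply/eqP; rewrite -size_poly_leq0 -(subnn S); apply: sQK.
have sE : forall m, smooth a (E m).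
  move=> m; apply: (@smooth_eqI _ a (fadd (fun x => \sum_(j < K)
     (Qs m j).[x] * pw (c' j) (ex1 b m) x * pw cK (ex2 b S m) x)
     (fun x => (QK m).[x] * pw cK (exg S m) x))); first by move=> y _.
  apply: smoothD; last exact: smooth_term1 hK.
  by apply: smooth_sum => j; apply: smooth_term (hc' j) hK.
pose w := fun x : R => (x + cK) ^+ 2.
have sw : smooth a w.
  apply: (@smooth_eqI _ a (horner (('X + cK%:P) ^+ 2))); last exact: smooth_horner.
  by move=> y _; rewrite /w horner_exp hornerD hornerX hornerC.
have wn0 : forall x, a < x -> w x != 0.
  by move=> x ax; rewrite /w expf_neq0 // gt_eqF // hK.
have rec : forall m x, a < x -> E m.+1 x = w x * derive1 (E m) x.
  move=> m x ax.
  have hd : is_derive x 1 (E m) (\sum_(j < K)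
     ((Qs m j)^`().[x] * pw (c' j) (ex1 b m) x * pw cK (ex2 b S m) x
      + (Qs m j).[x] * (ex1 b m * pw (c' j) (ex1 b m - 1) x) * pw cK (ex2 b S m) x
      + (Qs m j).[x] * pw (c' j) (ex1 b m) x * (ex2 b S m * pw cK (ex2 b S m - 1) x))
     + ((QK m)^`().[x] * pw cK (exg S m) x + (QK m).[x] * (exg S m * pw cK (exg S m - 1) x))).
    apply: is_deriveD; last exact: T1_der (hK x ax).
    apply: is_derive_sumI => j; exact: Tj_der (hc' j x ax) (hK x ax).
  rewrite derive1E; have [_ ->] := hd; rewrite /w mulrDr big_distrr /=.
  rewrite /E ex1S ex2S exgS (T1_id2 _ _ (hK x ax)).
  congr (_ + _); apply: eq_bigr => j _.
  by rewrite (Tj_id _ _ _ (hc' j x ax) (hK x ax)).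
have E0 : forall x, a < x -> E 0%N x = fmul (pw cK (b - S%:R + 1)) (fs b c P) x.
  move=> x ax; rewrite /E /fmul /fs big_ord_recr /= mulrDr big_distrr /=.
  congr (_ + _).
    apply: eq_bigr => j _; rewrite /ex1 /ex2 /P' /c' /= mulr0n subr0 addr0; ring.
  rewrite (_ : exg S 0 = (b - S%:R + 1) + - b); last by rewrite /exg mulr0n; ring.
  rewrite (pwD _ _ (hK x ax)) /QK /=; ring.
pose f' := fs (b + S%:R) c' (fun j => Qs S j).
have ES : forall x, a < x -> E S x = fmul (pw cK (b + 1)) f' x.
  move=> x ax; rewrite /E QKS horner0 mul0r addr0 /fmul /f' /fs big_distrr /=.
  apply: eq_bigr => j _.
  rewrite (_ : ex2 b S S = b + 1); last by rewrite /ex2; ring.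
  rewrite (_ : ex1 b S = - (b + S%:R)); last by rewrite /ex1; ring.
  ring.
have ES' : forall x, a < x -> f' x = fmul (pw cK (- (b + 1))) (E S) x.
  move=> x ax; rewrite /fmul ES // /fmul mulrA -(pwD _ _ (hK x ax)) addNr /pw powRr0 mul1r //.
have sf' : smooth a f'.
  apply: (@smooth_eqI _ a (fun x => \sum_(j < K) (Qs S j).[x] * pw (c' j) (- (b + S%:R)) x)) => //.
  by apply: smooth_sum => j; apply: smooth_term1 (hc' j).
have sf : smooth a (fs b c P).
  by apply: smooth_sum => j; apply: smooth_term1 (hc j).
have Z0 : Zlt a (E 0%N) (K * S + S).
  apply: (chain (w := w)) => //.
    exists x0; split => //; rewrite E0 // /fmul mulf_neq0 // gt_eqF // pw_gt0 //.
    exact: hK.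
  move=> [x1 [ax1 n1]].
  have z' : Zlt a f' (K * S).
    apply: IH => //.
    exists x1; split => //; move: n1; rewrite ES // /fmul mulf_eq0 negb_or.
    by case/andP.
  apply: (@Zlt_mul _ a (pw cK (- (b + 1)))); first exact: (smooth_pw (a:=a) hK).
    exact: sE.
  by apply: (Zlt_eqI _ z').
rewrite mulSn addnC.
apply: (@Zlt_mul _ a (pw cK (b - S%:R + 1))); first exact: (smooth_pw (a:=a) hK).
  exact: sf.
apply: (Zlt_eqI _ Z0) => y ay; exact: E0.
Qed.

End Inner.

Section Top.
Context {R : realType}.
Variable a : R.

Lemma top_count K (P0 : {poly R}) (P : 'I_K -> {poly R}) (c : 'I_K -> R) (S : nat) :
  (forall j x, a < x -> 0 < x + c j) -> (forall j, (size (P j) <= S)%N) ->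
  (exists x, a < x /\ P0.[x] + \sum_(j < K) (P j).[x] * pw (c j) (- (2^-1)) x != 0) ->
  Zlt a (fun x => P0.[x] + \sum_(j < K) (P j).[x] * pw (c j) (- (2^-1)) x)
    (K * S + size P0).
Proof.
move=> hc hP [x0 [ax0 nz0]].
pose ee := fun m : nat => - (2^-1 : R) - m%:R.
pose Rs := fun m (j : 'I_K) => seqop (fun m => op1 (c j) (ee m)) (P j) m.
pose G := fun (m : nat) (x : R) =>
  (P0^`(m)).[x] + \sum_(j < K) (Rs m j).[x] * pw (c j) (ee m) x.
have sRs : forall m j, (size (Rs m j) <= S)%N.
  elim=> [|m IHm] j; first exact: (hP j).
  exact: (size_op1_le (c j) (ee m) (IHm j)).
have sG : forall m, smooth a (G m).
  move=> m; apply: (@smooth_eqI _ a (fadd (horner (P0^`(m)))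
     (fun x => \sum_(j < K) (Rs m j).[x] * pw (c j) (ee m) x))); first by move=> y _.
  apply: smoothD; first exact: smooth_horner.
  by apply: smooth_sum => j; apply: smooth_term1 (hc j).
pose w := fun _ : R => (1 : R).
have sw : smooth a w.
  apply: (@smooth_eqI _ a (horner 1)); last exact: smooth_horner.
  by move=> y _; rewrite /w hornerC.
have wn0 : forall x, a < x -> w x != 0 by move=> x _; rewrite /w oner_eq0.
have eeS : forall m, ee m.+1 = ee m - 1.
  by move=> m; rewrite /ee -addn1 natrD; ring.
have rec : forall m x, a < x -> G m.+1 x = w x * derive1 (G m) x.
  move=> m x ax.
  have hd : is_derive x 1 (G m) ((P0^`(m))^`().[x] + \sum_(j < K)
     ((Rs m j)^`().[x] * pw (c j) (ee m) x + (Rs m j).[x] * (ee m * pw (c j) (ee m - 1) x))).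
    have h1 := is_derive_poly (P0^`(m)) x.
    have h2 : is_derive x 1 (fun y => \sum_(j < K) (Rs m j).[y] * pw (c j) (ee m) y)
      (\sum_(j < K) ((Rs m j)^`().[x] * pw (c j) (ee m) x + (Rs m j).[x] * (ee m * pw (c j) (ee m - 1) x))).
      apply: is_derive_sumI => j; exact: T1_der (hc j x ax).
    exact: (is_deriveD h1 h2).
  rewrite derive1E; have [_ ->] := hd; rewrite /w mul1r /G derivnS eeS.
  congr (_ + _); apply: eq_bigr => j _.
  by rewrite (T1_id1 _ _ (hc j x ax)).
have G0 : forall x, a < x -> G 0%N x = P0.[x] + \sum_(j < K) (P j).[x] * pw (c j) (- (2^-1)) x.
  by move=> x ax; rewrite /G /ee /= ?derivn0 ?mulr0n ?subr0.
have Gs : forall x, a < x -> G (size P0) x = fs (2^-1 + (size P0)%:R) c (Rs (size P0)) x.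
  move=> x ax; rewrite /G derivn_poly0 // horner0 add0r /fs.
  by apply: eq_bigr => j _; rewrite /ee opprD.
have Z : Zlt a (G 0%N) (K * S + size P0).
  apply: (chain (w := w)) => //.
    by exists x0; split => //; rewrite G0.
  move=> [x1 [ax1 n1]].
  have z : Zlt a (fs (2^-1 + (size P0)%:R) c (Rs (size P0))) (K * S).
    apply: inner => //.
    by exists x1; split => //; rewrite -Gs.
  by apply: (Zlt_eqI _ z) => y ay; rewrite Gs.
by apply: (Zlt_eqI _ Z) => y ay; rewrite G0.
Qed.

End Top.

Theorem theorem1p2 (R : realType) (K : nat) (hK : (1 <= K)%N)
  (P0 : {poly R}) (P : 'I_K -> {poly R}) (c : 'I_K -> R) :
  (exists x, in_dom c x /\ Fsqrt P0 P c x != 0) ->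
  zeros_with_mult_le (Fsqrt P0 P c) (in_dom c)
    ((K * \max_(j < K) size (P j) + size P0)%N%:Z - 1).
Proof.
move=> [x0 [dx0 nz0]].
pose j0 := Ordinal hK.
pose a := \big[Order.max/ - c j0]_(j < K) - c j.
have la : forall j, - c j <= a by move=> j; exact: le_bigmax.
have hdom : forall x, in_dom c x -> a < x.
  move=> x dx; apply: bigmax_lt => // j _; exact: dx.
have hc : forall j x, a < x -> 0 < x + c j.
  by move=> j x ax; have := la j; lra.
have hP : forall j, (size (P j) <= \max_(j < K) size (P j))%N.
  by move=> j; exact: leq_bigmax.
have eqF : forall x, a < x -> P0.[x] + \sum_(j < K) (P j).[x] * pw (c j) (- (2^-1)) x
    = Fsqrt P0 P c x.
  move=> x ax; rewrite /Fsqrt; congr (_ + _); apply: eq_bigr => j _.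
  by rewrite /pw powRN powR12_sqrt // ltW // hc.
have nz : exists x, a < x /\ P0.[x] + \sum_(j < K) (P j).[x] * pw (c j) (- (2^-1)) x != 0.
  by exists x0; split; [exact: hdom | rewrite eqF // hdom].
have Z := top_count hc hP nz.
have Z' := Zlt_eqI eqF Z.
move=> s m us hs.
have := Z' s m us (fun x xs => let: conj d z := hs x xs in conj (hdom x d) z).
lia.
Qed.
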